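(* Let $V$ be a finite-dimensional vector space over a finite field of characteristic $p$, equipped with a bilinear or hermitian form which is either nondegenerate or identically zero, and let $\Delta=\Delta(V)$ be the group of all similarities of $V$ (with respect to this form). Let $x\in\Delta$ be an element of prime-power order whose image in $\Delta/\mathrm{Z}(\Delta)$ has prime order. Then one of the following holds: (1) $x$ is unipotent and stabilizes a $1$-dimensional subspace; (2) the form is identically zero, $x$ is semisimple and leaves invariant two nonzero subspaces complementing each other; (3) the form is nondegenerate, $x$ is semisimple and leaves invariant a proper nonzero nondegenerate subspace and its orthogonal complement; (4) the form is nondegenerate and of maximal Witt index, $x$ is semisimple and leaves invariant a totally isotropic subspace of dimension $\frac{1}{2}\dim V$; (5) $x$ is semisimple and acts irreducibly on $V$.
   Context: An element is unipotent if its order is a power of $p$ and semisimple if its order is coprime to $p$. A subspace is nondegenerate if the restriction of the form to it is nondegenerate, and totally isotropic if the restriction of the form to it is identically zero. *)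

(* Defs.v *)
(* V = 'rV[F]_n (row vectors), linear maps act on the right
   (v |-> v *m x), subspaces are row spaces of matrices (mxalgebra). *)
From HB Require Import structures.
From mathcomp Require Import all_boot all_order all_algebra.
Set Implicit Arguments. Unset Strict Implicit. Unset Printing Implicit Defensive.
Import GRing.Theory.
Local Open Scope ring_scope.

Section Forms.
Variables (F : finFieldType) (n : nat) (sigma : {rmorphism F -> F}) (B : 'M[F]_n).

Definition sform (u v : 'rV[F]_n) : F := (u *m B *m (map_mx sigma v)^T) 0 0.

(* hermitian w.r.t. sigma (for sigma = id: symmetric bilinear) *)
Definition is_hermitian : Prop := forall u v, sform v u = sigma (sform u v).
Definition is_alternating : Prop := forall v, sform v v = 0.

Definition nondeg_on (U : 'M[F]_n) : Prop :=
  forall u, (u <= U)%MS -> (forall w, (w <= U)%MS -> sform u w = 0) -> u = 0.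
Definition form_nondeg : Prop := nondeg_on 1%:M.

Definition tot_isotropic (U : 'M[F]_n) : Prop :=
  forall u w, (u <= U)%MS -> (w <= U)%MS -> sform u w = 0.

Definition max_witt_index : Prop :=
  exists U : 'M[F]_n, tot_isotropic U /\ (\rank U).*2 = n.

Definition in_perp (U : 'M[F]_n) (v : 'rV[F]_n) : Prop :=
  forall u, (u <= U)%MS -> sform u v = 0.

Definition is_similarity (x : 'M[F]_n) : Prop :=
  x \in unitmx /\ exists lam : F, lam != 0 /\
    forall u v, sform (u *m x) (v *m x) = lam * sform u v.

Definition in_center (z : 'M[F]_n) : Prop :=
  is_similarity z /\ forall y, is_similarity y -> z *m y = y *m z.
End Forms.

Definition order_pow (F : fieldType) (n q : nat) (x : 'M[F]_n) : Prop :=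
  exists k, x ^+ (q ^ k) = 1%:M.
Definition unipotent (F : fieldType) (n p : nat) (x : 'M[F]_n) : Prop :=
  order_pow p x.
Definition semisimple (F : fieldType) (n p : nat) (x : 'M[F]_n) : Prop :=
  exists m, (0 < m)%N /\ coprime m p /\ x ^+ m = 1%:M.
Definition irreducible_on (F : fieldType) (n : nat) (x : 'M[F]_n) : Prop :=
  (0 < n)%N /\ forall U : 'M[F]_n, stablemx U x -> \rank U = 0%N \/ \rank U = n.

(* Main.v *)
Require Import Defs.
From HB Require Import structures.
From mathcomp Require Import all_boot all_order all_algebra.
From Stdlib Require Import Classical.
From mathcomp Require Import zify.
Set Implicit Arguments. Unset Strict Implicit. Unset Printing Implicit Defensive.
Import GRing.Theory.
Local Open Scope ring_scope.

Section Basics.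
Variables (F : finFieldType) (n : nat) (sigma : {rmorphism F -> F}) (B : 'M[F]_n).
Local Notation f := (sform sigma B).

Lemma sformDl u u' v : f (u + u') v = f u v + f u' v.
Proof. by rewrite /sform !mulmxDl mxE. Qed.

Lemma sformDr u v v' : f u (v + v') = f u v + f u v'.
Proof. by rewrite /sform map_mxD linearD /= mulmxDr mxE. Qed.

Definition perpL (W : 'M[F]_n) := kermx (B *m (map_mx sigma W)^T).

Lemma perpLP (W : 'M[F]_n) v :
  (v <= perpL W)%MS <-> (forall w, (w <= W)%MS -> f v w = 0).
Proof.
rewrite /perpL; split.
  move/sub_kermxP => H w /submxP [a ->].
  by rewrite /sform map_mxM trmx_mul !mulmxA -(mulmxA v) H !mul0mx mxE.
move=> H; apply/sub_kermxP; apply/rowP => j.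
rewrite [RHS]mxE -(H _ (row_sub j W)) /sform mulmxA !mxE.
by apply: eq_bigr => k _; rewrite !mxE.
Qed.

Lemma stableP (A x : 'M[F]_n) :
  (forall v : 'rV_n, (v <= A)%MS -> (v *m x <= A)%MS) -> stablemx A x.
Proof. by move=> H; apply/row_subP => i; rewrite row_mul; apply: H; apply: row_sub. Qed.

Lemma stableV (A x : 'M[F]_n) (v : 'rV[F]_n) : stablemx A x -> (v <= A)%MS -> (v *m x <= A)%MS.
Proof. by move=> hs hv; apply: submx_trans hs; apply: submxMr. Qed.

Lemma stab_inv (A x : 'M[F]_n) (u : 'rV[F]_n) : x \in unitmx -> stablemx A x -> (u <= A)%MS ->
  exists2 u', (u' <= A)%MS & u = u' *m x.
Proof.
move=> hx hs hu.
have: (A <= A *m x)%MS.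
  have := mxrank_leqif_sup hs; rewrite mxrankMfree ?row_free_unit //.
  by case=> _ <-.
move=> hA; case/submxP: (submx_trans hu hA) => a ->.
by exists (a *m A); rewrite ?submxMl ?mulmxA.
Qed.

Lemma cap_stable (A C x : 'M[F]_n) : stablemx A x -> stablemx C x -> stablemx (A :&: C)%MS x.
Proof.
move=> hA hC; apply: stableP => v; rewrite !sub_capmx => /andP [h1 h2].
by rewrite !stableV.
Qed.

Lemma adds_stable (A C x : 'M[F]_n) : stablemx A x -> stablemx C x -> stablemx (A + C)%MS x.
Proof.
move=> hA hC; apply: stableP => v /sub_addsmxP [[a c] /= ->].
by rewrite mulmxDl addmx_sub_adds // stableV // submxMl.
Qed.

Lemma perpL_stable (W x : 'M[F]_n) lam : x \in unitmx ->
  (forall u v, f (u *m x) (v *m x) = lam * f u v) ->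
  stablemx W x -> stablemx (perpL W) x.
Proof.
move=> hx hsim hW; apply: stableP => v /perpLP hv; apply/perpLP => w hw.
have [w' hw' ->] := stab_inv hx hW hw.
by rewrite hsim hv ?mulr0.
Qed.

Lemma sform_refl : (is_hermitian sigma B \/ (sigma =1 id /\ is_alternating sigma B)) ->
  forall u v, f u v = 0 -> f v u = 0.
Proof.
case=> [hh | [_ ha]] u v huv; first by rewrite hh huv rmorph0.
have := ha (u + v); rewrite !sformDl !sformDr !ha huv add0r addr0 add0r.
by [].
Qed.

Lemma ti_perp (U : 'M[F]_n) : tot_isotropic sigma B U <-> (U <= perpL U)%MS.
Proof.
split.
  by move=> h; apply/row_subP => i; apply/perpLP => w hw; apply: h => //; apply: row_sub.
by move=> h u w hu hw; have /perpLP := submx_trans hu h; apply.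
Qed.

Lemma nondeg_unit : form_nondeg sigma B -> B \in unitmx.
Proof.
move=> hnd; rewrite -row_free_unit -kermx_eq0; apply/rowV0P => v /sub_kermxP hv.
by apply: hnd; rewrite ?submx1 // => w _; rewrite /sform hv mul0mx mxE.
Qed.

Lemma rank_perpL (W : 'M[F]_n) : B \in unitmx -> \rank (perpL W) = (n - \rank W)%N.
Proof.
move=> hB; rewrite /perpL mxrank_ker; congr (_ - _)%N.
set M := (map_mx sigma W)^T.
have e : \rank M = \rank W by rewrite mxrank_tr mxrank_map.
rewrite -e; apply/eqP; rewrite eqn_leq; apply/andP; split; first exact: mxrankM_maxr.
by rewrite -{1}(mulKmx hB M) mxrankM_maxr.
Qed.

Lemma min_stable (x Y : 'M[F]_n) : stablemx Y x -> Y != 0 ->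
  exists W : 'M[F]_n, [/\ stablemx W x, (W <= Y)%MS, W != 0 &
    forall W' : 'M[F]_n, stablemx W' x -> (W' <= W)%MS -> W' != 0 -> (\rank W <= \rank W')%N].
Proof.
move=> hY hY0.
pose P k := [exists W : 'M[F]_n, [&& stablemx W x, (W <= Y)%MS, W != 0 & \rank W == k]].
have ex : exists k, P k by exists (\rank Y); apply/existsP; exists Y; rewrite hY submx_refl hY0 eqxx.
case: (ex_minnP ex) => k /existsP [W /and4P [h1 h2 h3 /eqP h4]] hmin.
exists W; split => // W' s1 s2 s3; rewrite h4; apply: hmin.
apply/existsP; exists W'; rewrite s1 s3 eqxx (submx_trans s2 h2) //.
Qed.

Lemma ti_adds (U W : 'M[F]_n) :
  (is_hermitian sigma B \/ (sigma =1 id /\ is_alternating sigma B)) ->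
  (U <= perpL U)%MS -> (W <= perpL W)%MS -> (W <= perpL U)%MS ->
  (U + W <= perpL (U + W)%MS)%MS.
Proof.
move=> hr hU hW hWU; apply: (proj1 (ti_perp (U + W)%MS)) => v v' /sub_addsmxP [[a b] ->] /sub_addsmxP [[c d] ->] /=.
rewrite !sformDl !sformDr.
have h1 : f (a *m U) (c *m U) = 0.
  by move/perpLP: (submx_trans (submxMl a U) hU); apply; apply: submxMl.
have h2 : f (b *m W) (d *m W) = 0.
  by move/perpLP: (submx_trans (submxMl b W) hW); apply; apply: submxMl.
have h3 : f (b *m W) (c *m U) = 0.
  by move/perpLP: (submx_trans (submxMl b W) hWU); apply; apply: submxMl.
have h4 : f (a *m U) (d *m W) = 0.
  apply: (sform_refl hr).
  by move/perpLP: (submx_trans (submxMl d W) hWU); apply; apply: submxMl.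
by rewrite h1 h2 h3 h4 !addr0.
Qed.

End Basics.
Section Maschke.
Variables (F : finFieldType) (n : nat) (x : 'M[F]_n) (m : nat).
Hypothesis hm0 : (0 < m)%N.
Hypothesis hmF : (m%:R : F) != 0.
Hypothesis hxm : x ^+ m = 1%:M.

Lemma maschke1 (U : 'M[F]_n) : stablemx U x ->
  exists W : 'M[F]_n, [/\ stablemx W x, \rank (U + W)%MS = n & (U :&: W)%MS = 0].
Proof.
move=> hU.
case: m hm0 hmF hxm => // m' _ hmF' hxm'.
pose y := x ^+ m'.
have xy : x *m y = 1%:M by rewrite mulmxE idmxE -exprS hxm' idmxE.
have yx : y *m x = 1%:M by rewrite mulmxE idmxE -exprSr hxm' idmxE.
have yxi : forall i, y ^+ i *m x ^+ i = 1%:M.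
  elim=> [|i IH]; first by rewrite !expr0 mulmx1.
  by rewrite exprS exprSr -!mulmxE mulmxA -(mulmxA y) IH mulmx1 yx.
have stU : forall (z : 'M[F]_n) i, stablemx U z -> stablemx U (z ^+ i).
  move=> z; elim=> [|i IH] hz; first by rewrite expr0 mulmx1.
  by rewrite exprSr -mulmxE mulmxA (submx_trans (submxMr _ (IH hz))).
have stUy : stablemx U y by apply: stU.
have [P hPU hPid] : exists2 P : 'M[F]_n, (P <= U)%MS &
    forall A : 'M[F]_n, (A <= U)%MS -> A *m P = A.
  by exists (pinvmx U *m U); [apply: submxMl | move=> A hA; rewrite mulmxA mulmxKpV].
pose phi := (m'.+1%:R)^-1 *: \sum_(i < m'.+1) (y ^+ i *m P *m x ^+ i).
have phiU : (phi <= U)%MS.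
  apply: scalemx_sub; apply: summx_sub => i _.
  apply: submx_trans (stU _ i hU); apply: submxMr; apply: submx_trans hPU; apply: submxMl.
have Uphi : U *m phi = U.
  rewrite -scalemxAr mulmx_sumr (eq_bigr (fun _ => U)) => [|i _].
    by rewrite sumr_const card_ord -scaler_nat scalerA mulVf ?scale1r.
  rewrite (mulmxA U) (mulmxA U) hPid ?(stU _ _ stUy) //.
  by rewrite -mulmxA yxi mulmx1.
have phix : phi *m x = x *m phi.
  rewrite -scalemxAl -scalemxAr; congr (_ *: _).
  rewrite mulmx_suml mulmx_sumr [LHS]big_ord_recr [RHS]big_ord_recl /= addrC.
  congr (_ + _).
    have hx1 : x ^+ m' *m x = 1%:M by rewrite mulmxE -exprSr hxm'.
    rewrite -(mulmxA _ (x ^+ m')) hx1 mulmx1 !expr0 mulmx1 -idmxE mul1mx; congr (_ *m _).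
    have ym : y ^+ m'.+1 = 1%:M.
      by rewrite /y -exprM mulnC exprM hxm' idmxE expr1n.
    by rewrite -[LHS]mulmx1 -yx mulmxA mulmxE -exprSr ym idmxE mul1r.
  apply: eq_bigr => i _; rewrite /= !mulmxA.
  have -> : bump 0 i = i.+1 by [].
  have e1 : x ^+ i *m x = x ^+ i.+1 by rewrite mulmxE exprSr.
  have e2 : x *m y ^+ i.+1 = y ^+ i by rewrite exprS mulmxE mulrA -mulmxE xy mul1mx.
  by rewrite -(mulmxA _ (x ^+ i) x) e1 e2.
have phi2 : phi *m phi = phi.
  by case/submxP: phiU => a hA; rewrite {1}hA -mulmxA Uphi -hA.
exists (kermx phi); split.
- apply/sub_kermxP; by rewrite -mulmxA -phix mulmxA mulmx_ker mul0mx.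
- apply/eqP; rewrite eqn_leq rank_leq_col /=.
  rewrite -{1}(mxrank1 F n) mxrankS //; apply/row_subP => i.
  set v := row i 1%:M.
  have -> : v = v *m phi + (v - v *m phi) by rewrite addrC subrK.
  apply: addmx_sub_adds; first by apply: submx_trans (submxMl v phi) phiU.
  by apply/sub_kermxP; rewrite mulmxBl -mulmxA phi2 subrr.
- apply/eqP/rowV0P => v; rewrite sub_capmx => /andP[/submxP[u ->] /sub_kermxP].
  by rewrite -mulmxA Uphi.
Qed.
End Maschke.

Lemma nondeg_case (F : finFieldType) (p n : nat) (sigma : {rmorphism F -> F})
    (B x : 'M[F]_n) (lam : F) :
  (is_hermitian sigma B \/ (sigma =1 id /\ is_alternating sigma B)) ->
  form_nondeg sigma B -> x \in unitmx ->
  (forall u v, sform sigma B (u *m x) (v *m x) = lam * sform sigma B u v) ->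
  semisimple p x ->
  (forall U : 'M[F]_n, stablemx U x ->
     exists W : 'M[F]_n, [/\ stablemx W x, \rank (U + W)%MS = n & (U :&: W)%MS = 0]) ->
  forall U0 : 'M[F]_n, stablemx U0 x -> \rank U0 <> 0%N -> \rank U0 <> n ->
      [/\ form_nondeg sigma B, semisimple p x &
        exists U : 'M[F]_n, [/\ \rank U <> 0%N, (\rank U < n)%N,
          nondeg_on sigma B U, stablemx U x &
          forall v, in_perp sigma B U v -> in_perp sigma B U (v *m x)]] \/
      [/\ form_nondeg sigma B, max_witt_index sigma B, semisimple p x &
        exists U : 'M[F]_n, [/\ tot_isotropic sigma B U, (\rank U).*2 = n
                              & stablemx U x]].
Proof.
move=> hr hnd hx hsim hss hmas U0 hU0s hU0a hU0b.
have hB := nondeg_unit hnd.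
pose PT k := [exists U : 'M[F]_n, [&& stablemx U x, (U <= perpL sigma B U)%MS & \rank U == k]].
have ex : exists k, PT k.
  by exists 0%N; rewrite /PT; apply/existsP; exists 0; rewrite mul0mx !sub0mx mxrank0 eqxx.
have bound : forall k, PT k -> (k <= n)%N.
  by move=> k /existsP [U /and3P [_ _ /eqP <-]]; apply: rank_leq_col.
case: (ex_maxnP ex bound) => k /existsP [U /and3P [hUs hUti /eqP hUk]] hmax.
set L := perpL sigma B U.
have hL : \rank L = (n - \rank U)%N by apply: rank_perpL.
have hLs : stablemx L x by apply: (perpL_stable hx hsim hUs).
have hUL : (\rank U <= n - \rank U)%N by rewrite -hL mxrankS.
case: (eqVneq (\rank U).*2 n) => h2.
  right; split => //; first by exists U; split => //; apply/ti_perp.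
  by exists U; split => //; apply/ti_perp.
left.
have hlt : (\rank U < \rank L)%N.
  rewrite hL; move: h2 hUL; rewrite -addnn => /eqP; lia.
have [W0 [hW0s hW0r hW0c]] := hmas U hUs.
set Y := (W0 :&: L)%MS.
have hYs : stablemx Y x by apply: cap_stable.
have hLY : (L <= U + Y)%MS.
  rewrite (matrix_modl W0 hUti) sub_capmx submx_refl andbT.
  by apply: submx_full; rewrite /row_full hW0r.
have hY0 : Y != 0.
  rewrite -mxrank_eq0; apply/eqP => hY.
  have := leq_trans (mxrankS hLY) (mxrank_adds_leqif U Y).1.
  by rewrite hY addn0 leqNgt hlt.
have [W [hWs hWY hW0 hWmin]] := min_stable hYs hY0.
set K := (W :&: perpL sigma B W)%MS.
have hKs : stablemx K x by apply: cap_stable => //; apply: (perpL_stable hx hsim hWs).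
case: (eqVneq K 0) => hK.
  split => //; exists W; split => //.
  - by move/eqP; rewrite mxrank_eq0; apply/negP.
  - rewrite ltn_neqAle rank_leq_col andbT; apply/eqP => hWn.
    have hU0W : (U0 <= W)%MS by apply: submx_full; rewrite /row_full hWn.
    have h := hWmin U0 hU0s hU0W.
    apply: hU0b; apply/eqP; rewrite eqn_leq rank_leq_col -{1}hWn h //.
    by rewrite -mxrank_eq0; apply/eqP.
  - move=> u hu hw; apply/eqP; rewrite -submx0 -hK sub_capmx hu /=.
    by apply/perpLP.
  - move=> v hv u hu; have [u' hu' ->] := stab_inv hx hWs hu.
    by rewrite hsim hv ?mulr0.
exfalso.
have hWK : (W <= K)%MS.
  have h := hWmin K hKs (capmxSl _ _) hK.
  have e := (mxrank_leqif_sup (capmxSl W (perpL sigma B W))).2.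
  by rewrite -e eqn_leq h mxrankS ?capmxSl.
have hWti : (W <= perpL sigma B W)%MS by apply: submx_trans hWK (capmxSr _ _).
have hWW0 : (W <= W0)%MS by apply: submx_trans hWY (capmxSl _ _).
have hWL : (W <= L)%MS by apply: submx_trans hWY (capmxSr _ _).
have hUW : (U :&: W)%MS = 0.
  apply/eqP; rewrite -submx0; apply: submx_trans (capmxS (submx_refl U) hWW0) _.
  by rewrite hW0c submx_refl.
have hPT : PT (\rank (U + W)%MS).
  apply/existsP; exists (U + W)%MS; rewrite eqxx andbT adds_stable //=.
  exact: ti_adds.
have := hmax _ hPT; rewrite mxrank_disjoint_sum // -hUk -{2}(addn0 (\rank U)) leq_add2l leqn0 mxrank_eq0.
by apply/negP.
Qed.

Lemma unip_fix (F : fieldType) (p n k : nat) (x : 'M[F]_n) : (0 < n)%N ->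
  p \in [pchar F] -> x ^+ (p ^ k) = 1%:M ->
  exists U : 'M[F]_n, \rank U = 1%N /\ stablemx U x.
Proof.
case: n x => [//|n'] x _ hp hk.
have hpM : p \in [pchar 'M[F]_n'.+1].
  apply/andP; split; first exact: pcharf_prime hp.
  by rewrite -(scaler_nat p (1 : 'M[F]_n'.+1)) (pcharf0 hp) scale0r.
have frob : forall j, (x - 1) ^+ (p ^ j) = x ^+ (p ^ j) - 1.
  elim=> [|j IH]; first by rewrite !expn0 !expr1.
  rewrite expnSr !exprM IH -!(pFrobenius_autE hpM) pFrobenius_autB_comm.
    by rewrite pFrobenius_aut1.
  exact: commr1.
have h0 : (x - 1) ^+ (p ^ k) = 0 by rewrite frob hk idmxE subrr.
have : kermx (x - 1) != 0.
  rewrite kermx_eq0 row_free_unit; apply/negP => hu.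
  have := unitrX (p ^ k) hu; rewrite h0 unitr0.
  by [].
case/rowV0Pn => v /sub_kermxP hv hv0.
have hvx : v *m x = v.
  by apply/eqP; rewrite -subr_eq0 -{2}(mulmx1 v) -mulmxBr idmxE hv.
exists <<v>>%MS; split; first by rewrite genmxE rank_rV hv0.
by rewrite (eqmxMr x (genmxE v)) genmxE hvx submx_refl.
Qed.

Theorem lemma1p11 (F : finFieldType) (p n : nat) (sigma : {rmorphism F -> F})
    (B : 'M[F]_n) (x : 'M[F]_n) :
  p \in [pchar F] ->
  (forall a, sigma (sigma a) = a) ->
  (is_hermitian sigma B \/ (sigma =1 id /\ is_alternating sigma B)) ->
  (form_nondeg sigma B \/ B = 0) ->
  is_similarity sigma B x ->
  (exists q, prime q /\ order_pow q x) ->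
  (exists r, prime r /\ in_center sigma B (x ^+ r) /\ ~ in_center sigma B x) ->
  (* (1) *) (
      unipotent p x /\
        exists U : 'M[F]_n, \rank U = 1%N /\ stablemx U x) \/
      (* (2) *)
      [/\ B = 0, semisimple p x &
        exists U W : 'M[F]_n, [/\ \rank U <> 0%N /\ \rank W <> 0%N,
          \rank (U :&: W)%MS = 0%N, \rank (U + W)%MS = n,
          stablemx U x & stablemx W x]] \/
      (* (3) *)
      [/\ form_nondeg sigma B, semisimple p x &
        exists U : 'M[F]_n, [/\ \rank U <> 0%N, (\rank U < n)%N,
          nondeg_on sigma B U, stablemx U x &
          forall v, in_perp sigma B U v -> in_perp sigma B U (v *m x)]] \/
      (* (4) *)
      [/\ form_nondeg sigma B, max_witt_index sigma B, semisimple p x &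
        exists U : 'M[F]_n, [/\ tot_isotropic sigma B U, (\rank U).*2 = n
                              & stablemx U x]] \/
      (* (5) *)
      (semisimple p x /\ irreducible_on x).
Proof.
move=> hp _ hr hnd [hx [lam [hlam hsim]]] [q [hq [k hk]]] [r [hr' [hc hnc]]].
have npos : (0 < n)%N.
  case: (posnP n) => // n0; exfalso; apply: hnc.
  suff <- : x ^+ r = x by [].
  by subst n; apply/matrixP => i; case: i.
case: (eqVneq q p) => [eqp | hqp].
  left; split; first by exists k; rewrite -eqp.
  by apply: (unip_fix (k:=k) npos hp); rewrite -eqp.
have hpp := pcharf_prime hp.
have hq0 : (0 < q ^ k)%N by rewrite expn_gt0 prime_gt0.
have hss : semisimple p x.
  exists (q ^ k)%N; split; first done; split; last done; apply: coprimeXl.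
  by rewrite prime_coprime // dvdn_prime2 // eq_sym.
have hmF : ((q ^ k)%N%:R : F) != 0.
  rewrite -(dvdn_pcharf hp) Euclid_dvdX // dvdn_prime2 //.
  by rewrite eq_sym (negbTE hqp).
have hmas := maschke1 hq0 hmF hk.
case: (classic (irreducible_on x)) => hirr; first by right; right; right; right.
have [U0 [hU0s hU0a hU0b]] :
    exists U0 : 'M[F]_n, [/\ stablemx U0 x, \rank U0 <> 0%N & \rank U0 <> n].
  apply: NNPP => hne; apply: hirr; split => // U hU.
  apply: NNPP => h; apply: hne; exists U; split => //.
    by move=> e; apply: h; left.
  by move=> e; apply: h; right.
case: hnd => [hnd | hB0].
  right; right.
  by case: (nondeg_case hr hnd hx hsim hss hmas hU0s hU0a hU0b) => h; [left | right; left].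
right; left; split => //.
have [W [hWs hWr hWc]] := hmas U0 hU0s.
exists U0, W; split => //; last by rewrite hWc mxrank0.
split => // hW; apply: hU0b; apply/eqP; rewrite eqn_leq rank_leq_col /=.
by rewrite -{1}hWr -[X in (_ <= X)%N]addn0 -hW (mxrank_adds_leqif U0 W).1.
Qed.
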